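(* Fix integers $r\ge2$ and $k\ge1$. Let $H$ be a finite graph with minimum degree at least $2rk$, and let $G$ be the exact $(r-1)$-subdivision of $H$. Then $\mathrm{fw}_r(G)>k$.
   Context: Graphs are finite, simple, undirected. The exact $s$-subdivision of $H$ is obtained by replacing every edge of $H$ by a path of length $s+1$ (with new internal vertices). A $k$-flip of $G$ is obtained by choosing a partition of $V(G)$ into at most $k$ parts and, for some pairs $A,B$ of (possibly equal) parts, inverting adjacency of every pair of distinct $x\in A,y\in B$. Flipper game of radius $r$ and width $k$: $G_0=G$, runner chooses $v_0$; in round $i\ge1$ the flipper announces a $k$-flip $G_i$ of $G$, the runner moves from $v_{i-1}$ to $v_i$ along a path of length at most $r$ in $G_{i-1}$; the flipper wins if $v_i$ is isolated in $G_i$. $\mathrm{fw}_r(G)$ is the least $k$ for which the flipper has a winning strategy. *)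

(* Defs.v *)
From mathcomp Require Import all_boot.
Set Implicit Arguments. Unset Strict Implicit. Unset Printing Implicit Defensive.

Definition simple_graph (T : finType) (e : rel T) : Prop :=
  symmetric e /\ irreflexive e.

Definition min_degree_ge (T : finType) (e : rel T) (d : nat) : Prop :=
  forall v : T, d <= #|[set w | e v w]|.

(* Each edge {u,v} of H is represented once, by the ordered pair (u,v) with
   enum_rank u < enum_rank v; its s internal vertices are (u,v,j), j : 'I_s,
   the path being u - (u,v,0) - (u,v,1) - ... - (u,v,s-1) - v. *)
Definition subdiv_ok (V : finType) (e : rel V) (s : nat)
  (x : V + (V * V * 'I_s)) : bool :=
  match x with
  | inl _ => true
  | inr (u, v, _) => e u v && (enum_rank u < enum_rank v)
  end.

Definition subdiv_vert (V : finType) (e : rel V) (s : nat) :=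
  {x : V + (V * V * 'I_s) | subdiv_ok e x}.

Definition subdiv_adj0 (V : finType) (e : rel V) (s : nat)
  (x y : V + (V * V * 'I_s)) : bool :=
  match x, y with
  | inl a, inl b => (s == 0) && e a b
  | inl a, inr (u, v, j) | inr (u, v, j), inl a =>
      ((a == u) && (nat_of_ord j == 0)) || ((a == v) && (nat_of_ord j == s.-1))
  | inr (u, v, i), inr (u', v', j) =>
      [&& u == u', v == v' & (i.+1 == j :> nat) || (j.+1 == i :> nat)]
  end.

Definition subdiv (V : finType) (e : rel V) (s : nat) : rel (subdiv_vert e s) :=
  fun x y => subdiv_adj0 e (val x) (val y).

Definition flip (T : finType) (G : rel T) (k : nat) (p : T -> 'I_k)
  (F : rel 'I_k) : rel T :=
  fun x y => (x != y) && (G x y (+) F (p x) (p y)).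

Definition within (T : finType) (e : rel T) (n : nat) (x y : T) : Prop :=
  exists s : seq T, [/\ size s <= n, path e x s & last x s = y].

Definition isolated (T : finType) (e : rel T) (v : T) : Prop :=
  forall w, ~~ e v w.

(* flipper_wins_in G r k n Gc v : from the position where the current graph is
   Gc (= G_{i-1}) and the runner is on v (= v_{i-1}), the flipper can force a
   win within n more rounds. *)
Fixpoint flipper_wins_in (T : finType) (G : rel T) (r k n : nat)
  (Gc : rel T) (v : T) : Prop :=
  match n with
  | 0 => False
  | n'.+1 =>
      exists (p : T -> 'I_k) (F : rel 'I_k), symmetric F /\
        forall w, within Gc r v w ->
          isolated (flip G p F) w \/ flipper_wins_in G r k n' (flip G p F) w
  end.

(* The flipper has a winning strategy in the flipper game of radius r and width k
   on G (G_0 = G, runner picks v_0 freely). *)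
Definition flipper_wins (T : finType) (G : rel T) (r k : nat) : Prop :=
  forall v0 : T, exists n, flipper_wins_in G r k n G v0.

Definition fw_gt (T : finType) (G : rel T) (r k : nat) : Prop :=
  forall k', flipper_wins G r k' -> k < k'.

Arguments subdiv {V} e s.
Arguments subdiv_vert {V} e s.

(* Main.v *)
Require Import Defs.
From mathcomp Require Import all_boot zify.
From Stdlib Require Import ClassicalEpsilon.
Set Implicit Arguments. Unset Strict Implicit. Unset Printing Implicit Defensive.
Definition pr (V : finType) (e : rel V) (s : nat) (a : V) : subdiv_vert e s :=
  exist (fun x => subdiv_ok e x) (inl a) isT.
Definition mid (V : finType) (e : rel V) (q : nat) (u w : V) (j : nat) : subdiv_vert e q.+1 :=
  (insubd (pr e q.+1 u) (inr (u, w, inord j)) : {x : V + (V*V*'I_q.+1) | subdiv_ok e x}).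
Lemma midE (V : finType) (e : rel V) (q : nat) (u w : V) (j : nat) :
  e u w -> enum_rank u < enum_rank w -> val (mid e q u w j) = inr (u, w, inord j).
Proof. move=> h1 h2; rewrite /mid insubdK // unfold_in /= h1 h2 //. Qed.

Definition yv (V : finType) (e : rel V) (q : nat) (a x : V) (t : nat) : subdiv_vert e q.+1 :=
  if t == 0 then pr e q.+1 a
  else if q.+2 <= t then pr e q.+1 x
  else if enum_rank a < enum_rank x then mid e q a x t.-1
  else mid e q x a (q.+1 - t).

Lemma yv_mid (V : finType) (e : rel V) (q : nat) (a x : V) (t : nat) :
  symmetric e -> e a x -> a != x -> 1 <= t <= q.+1 ->
  val (yv e q a x t) = if enum_rank a < enum_rank x then inr (a, x, inord t.-1)
                       else inr (x, a, inord (q.+1 - t)).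
Proof.
move=> se hax nax /andP [t1 t2]; rewrite /yv.
have -> : (t == 0) = false by lia.
have -> : (q.+2 <= t) = false by lia.
case: ifP => hr; first by rewrite midE.
rewrite midE //; first by rewrite se.
have : (enum_rank a : nat) != enum_rank x.
  by rewrite val_eqE; apply: contra nax => /eqP/enum_rank_inj ->.
move: hr; lia.
Qed.

Lemma yv_mid' (V : finType) (e : rel V) (q : nat) (a x : V) (t : nat) :
  symmetric e -> e a x -> a != x -> 1 <= t <= q.+1 ->
  proj1_sig (yv e q a x t) = if enum_rank a < enum_rank x then inr (a, x, inord t.-1)
                       else inr (x, a, inord (q.+1 - t)).
Proof. exact: yv_mid. Qed.

Lemma yv0 (V : finType) (e : rel V) (q : nat) (a x : V) : yv e q a x 0 = pr e q.+1 a.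
Proof. by []. Qed.
Lemma yvr (V : finType) (e : rel V) (q : nat) (a x : V) : yv e q a x q.+2 = pr e q.+1 x.
Proof. by rewrite /yv /= leqnn. Qed.

Lemma sub_adjE (V : finType) (e : rel V) (s : nat) (u w : subdiv_vert e s) :
  subdiv e s u w = subdiv_adj0 e (proj1_sig u) (proj1_sig w).
Proof. by case: u; case: w. Qed.

Lemma G_irr (V : finType) (e : rel V) (q : nat) (u : subdiv_vert e q.+1) :
  ~~ subdiv e q.+1 u u.
Proof.
case: u => [[a|[[u w] i]] h]; rewrite /subdiv /= //.
rewrite !eqxx /=; lia.
Qed.

Lemma yv_adj (V : finType) (e : rel V) (q : nat) (a x : V) (t : nat) :
  symmetric e -> irreflexive e -> e a x -> t <= q.+1 ->
  subdiv e q.+1 (yv e q a x t) (yv e q a x t.+1).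
Proof.
move=> se ie hax ht.
have nax : a != x by apply: contraTneq hax => ->; rewrite ie.
rewrite sub_adjE.
have [->|t0] := eqVneq t 0.
  rewrite yv0 (@yv_mid' _ _ q a x 1 se hax nax) //=.
  case: ifP => _ /=; rewrite !eqxx ?inordK //=; lia.
have [->|tq] := eqVneq t q.+1.
  rewrite yvr (@yv_mid' _ _ q a x q.+1 se hax nax) ?leqnn //.
  case: ifP => _ /=; rewrite !eqxx ?inordK //=; lia.
rewrite (@yv_mid' _ _ q a x t se hax nax); last lia.
rewrite (@yv_mid' _ _ q a x t.+1 se hax nax); last lia.
case: ifP => _ /=; rewrite !eqxx ?inordK //=; lia.
Qed.

Lemma yv_cross (V : finType) (e : rel V) (q : nat) (a x x' : V) (t : nat) :
  symmetric e -> irreflexive e -> e a x -> e a x' -> x != x' -> 1 <= t <= q.+1 ->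
  ~~ subdiv e q.+1 (yv e q a x t) (yv e q a x' t.+1) && (yv e q a x t != yv e q a x' t.+1).
Proof.
move=> se ie hax hax' nxx ht.
have nax : a != x by apply: contraTneq hax => ->; rewrite ie.
have nax' : a != x' by apply: contraTneq hax' => ->; rewrite ie.
have e1 : (x == x') = false by apply/negbTE.
have e2 : (x' == x) = false by rewrite eq_sym; apply/negbTE.
have e3 : (a == x) = false by apply/negbTE.
have e4 : (x == a) = false by rewrite eq_sym; apply/negbTE.
have e5 : (a == x') = false by apply/negbTE.
have e6 : (x' == a) = false by rewrite eq_sym; apply/negbTE.
have E1 := @yv_mid' _ _ q a x t se hax nax ht.
have [et|tq] := eqVneq t q.+1.
  have E2 : sval (yv e q a x' t.+1) = inl x' by rewrite et yvr.
  apply/andP; split.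
    by rewrite sub_adjE E1 E2 /=; case: ifP => _ /=; rewrite ?e1 ?e2 ?e3 ?e4 ?e5 ?e6.
  apply/negP => /eqP /(congr1 (@proj1_sig _ _)).
  by rewrite E1 E2; case: ifP.
have ht' : 1 <= t.+1 <= q.+1 by lia.
have E2 := @yv_mid' _ _ q a x' t.+1 se hax' nax' ht'.
apply/andP; split.
  by rewrite sub_adjE E1 E2; case: ifP => _; case: ifP => _ /=; rewrite ?e1 ?e2 ?e3 ?e4 ?e5 ?e6 ?eqxx /= ?andbF.
apply/negP => /eqP /(congr1 (@proj1_sig _ _)).
rewrite E1 E2.
by case: ifP => _; case: ifP => _ [] => // /eqP; rewrite ?e1 ?e2 ?e3 ?e4 ?e5 ?e6.
Qed.

Lemma yv_F4 (V : finType) (e : rel V) (q : nat) (a x a' : V) :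
  symmetric e -> irreflexive e -> e a x -> a' != a -> x != a' ->
  ~~ subdiv e q.+1 (pr e q.+1 a') (yv e q a x 1).
Proof.
move=> se ie hax n1 n2.
have nax : a != x by apply: contraTneq hax => ->; rewrite ie.
rewrite sub_adjE (@yv_mid' _ _ q a x 1 se hax nax) //.
have e1 : (a' == a) = false by apply/negbTE.
have e2 : (a' == x) = false by rewrite eq_sym; apply/negbTE.
by case: ifP => _ /=; rewrite e1 e2.
Qed.

Lemma within_refl (T : finType) (g : rel T) n x : within g n x x.
Proof. by exists [::]. Qed.

Lemma within_step (T : finType) (g : rel T) n x y z :
  within g n x y -> g y z -> within g n.+1 x z.
Proof.
case=> s [hs hp hl] hyz; exists (rcons s z); split.
- by rewrite size_rcons.
- by rewrite rcons_path hp hl.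
- by rewrite last_rcons.
Qed.

Definition wb (T : finType) (g : rel T) n x y : bool :=
  if excluded_middle_informative (within g n x y) then true else false.

Lemma wbP (T : finType) (g : rel T) n x y : reflect (within g n x y) (wb g n x y).
Proof. rewrite /wb; case: excluded_middle_informative => h; by constructor. Qed.

Definition firstbad (T : finType) (g : rel T) v (z : nat -> T) n :=
  find (fun t => ~~ wb g t v (z t)) (iota 0 n).

Lemma firstbadP (T : finType) (g : rel T) v (z : nat -> T) q :
  z 0 = v -> g v (z 1) -> ~~ wb g q.+2 v (z q.+2) ->
  [/\ 2 <= firstbad g v z q.+3 <= q.+2, ~~ wb g (firstbad g v z q.+3) v (z (firstbad g v z q.+3))
     & wb g (firstbad g v z q.+3).-1 v (z (firstbad g v z q.+3).-1)].
Proof.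
move=> h0 h1 nr.
have hh : has (fun t => ~~ wb g t v (z t)) (iota 0 q.+3).
{ apply/hasP; exists q.+2; last exact nr. rewrite mem_iota; lia. }
have lt : firstbad g v z q.+3 < q.+3 by move: hh; rewrite has_find size_iota.
have nf : ~~ wb g (firstbad g v z q.+3) v (z (firstbad g v z q.+3)).
{ have := nth_find 0 hh; rewrite nth_iota //. }
have bf : forall t, t < firstbad g v z q.+3 -> wb g t v (z t).
{ move=> t ht; have := before_find 0 ht; rewrite nth_iota; [by move/negPn | lia]. }
have f0 : firstbad g v z q.+3 != 0.
{ apply/eqP => e0; move: nf; rewrite e0 h0; move/wbP; apply; exact: within_refl. }
have f1 : firstbad g v z q.+3 != 1.
{ apply/eqP => e1; move: nf; rewrite e1; move/wbP; apply.
  apply: within_step h1; exact: within_refl. }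
split; [lia | exact nf | apply: bf; lia].
Qed.

Lemma S_lemma (T X : finType) (G : rel T) (k' : nat) (p : T -> 'I_k') (F : rel 'I_k')
  (q : nat) (v : T) (I : {set X}) (z : X -> nat -> T)
  (Girr : forall u, ~~ G u u)
  (h0 : forall i, i \in I -> z i 0 = v)
  (h1 : forall i, i \in I -> flip G p F v (z i 1))
  (hcons : forall i t, i \in I -> 1 <= t <= q.+1 -> G (z i t) (z i t.+1))
  (hcross : forall i j t, i \in I -> j \in I -> i != j -> 1 <= t <= q.+1 ->
      ~~ G (z i t) (z j t.+1) && (z i t != z j t.+1)) :
  #|[set i in I | ~~ wb (flip G p F) q.+2 v (z i q.+2)]| <= q.+1 * k'.
Proof.
set Gc := flip G p F.
set U := [set i in I | _].
pose f i := firstbad Gc v (z i) q.+3.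
have Hf : forall i, i \in U -> [/\ 2 <= f i <= q.+2, ~~ wb Gc (f i) v (z i (f i))
     & wb Gc (f i).-1 v (z i (f i).-1)].
{ move=> i; rewrite inE => /andP [iI nr]; apply: firstbadP; [exact: h0 | exact: h1 | exact nr]. }
clearbody f.
have HF : forall i, i \in U -> F (p (z i (f i).-1)) (p (z i (f i))).
{ move=> i iU; have [hb nf wf] := Hf i iU.
  have iI : i \in I by move: iU; rewrite inE => /andP [].
  have [m' em] : exists m', f i = m'.+1 by exists (f i).-1; lia.
  move: hb nf wf; rewrite em /= => hb nf wf.
  have hG : G (z i m') (z i m'.+1) by apply: hcons => //; lia.
  have hne : z i m' != z i m'.+1.
  { apply/eqP => ee; move: hG; rewrite ee; by rewrite (negbTE (Girr _)). }
  apply/negPn/negP => nF; move: nf => /wbP; apply.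
  apply: (within_step (y := z i m')); first by apply/wbP.
  by rewrite /Gc /flip hne hG (negbTE nF). }
pose g i := (inord (f i - 2) : 'I_q.+1, p (z i (f i))).
have ginj : {in U &, injective g}.
{ move=> i j iU jU [e1 e2].
  have [hbi nfi wfi] := Hf i iU; have [hbj nfj wfj] := Hf j jU.
  have iI : i \in I by move: iU; rewrite inE => /andP [].
  have jI : j \in I by move: jU; rewrite inE => /andP [].
  have efij : f i = f j.
  { move/(congr1 (@nat_of_ord _)): e1; rewrite !inordK; lia. }
  apply/eqP/negPn/negP => nij.
  have [m' em] : exists m', f i = m'.+1 by exists (f i).-1; lia.
  have HFi := HF i iU.
  move: nfj e2 HFi wfi; rewrite -efij em /= => nfj e2 HFi wfi.
  move: nfj => /wbP; apply.
  apply: (within_step (y := z i m')); first by apply/wbP.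
  have hm : 1 <= m' <= q.+1 by lia.
  have /andP [nG ne] := hcross i j m' iI jI nij hm.
  by rewrite /Gc /flip ne (negbTE nG) /= -e2. }
rewrite -(card_in_imset ginj); apply: leq_trans (max_card _) _.
by rewrite card_prod !card_ord.
Qed.

Lemma pr_inj (V : finType) (e : rel V) (s : nat) : injective (@pr V e s).
Proof. by move=> a b /(congr1 (@proj1_sig _ _)) [->]. Qed.

Lemma pr_ne_y1 (V : finType) (e : rel V) (q : nat) (a x a' : V) :
  symmetric e -> irreflexive e -> e a x -> pr e q.+1 a' != yv e q a x 1.
Proof.
move=> se ie hax.
have nax : a != x by apply: contraTneq hax => ->; rewrite ie.
apply/eqP => /(congr1 (@proj1_sig _ _)).
by rewrite (@yv_mid' _ _ q a x 1 se hax nax) //; case: ifP.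
Qed.

Definition Rset (V : finType) (e : rel V) (q : nat) (Gc : rel (subdiv_vert e q.+1)) (a : V)
  : {set V} := [set b | (b != a) && wb Gc q.+2 (pr e q.+1 a) (pr e q.+1 b)].

Definition good (V : finType) (e : rel V) (q k : nat) (Gc : rel (subdiv_vert e q.+1)) (a : V) :=
  k <= #|Rset Gc a|.

Lemma bad_bad (V : finType) (e : rel V) (q k k' : nat)
  (p : subdiv_vert e q.+1 -> 'I_k') (F : rel 'I_k')
  (se : symmetric e) (ie : irreflexive e)
  (hdeg : forall v, 2 * q.+2 * k <= #|[set w | e v w]|) (kk : k' <= k) (a a' : V) :
  a != a' -> p (pr e q.+1 a) = p (pr e q.+1 a') ->
  ~~ good k (flip (subdiv e q.+1) p F) a -> good k (flip (subdiv e q.+1) p F) a'.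
Proof.
move=> naa' hp; rewrite /good -ltnNge => hbad.
set G := subdiv e q.+1.
set Gc := flip G p F.
set v := pr e q.+1 a; set v' := pr e q.+1 a'.
set N := [set x | e a x].
set RB := [set x | wb Gc q.+2 v (pr e q.+1 x)].
set I1 := [set x in N | Gc v (yv e q a x 1)].
set W := [set x in N | ~~ Gc v (yv e q a x 1)].
have c1 : #|N :&: RB| <= #|Rset Gc a|.
{ apply: subset_leq_card; apply/subsetP => x; rewrite !inE => /andP [hx hw].
  rewrite hw andbT; apply: contraTneq hx => ->; by rewrite ie. }
have S1 : #|[set i in I1 | ~~ wb Gc q.+2 v (yv e q a i q.+2)]| <= q.+1 * k'.
{ apply: S_lemma.
  - exact: G_irr.
  - by [].
  - by move=> i; rewrite inE => /andP [].
  - move=> i t; rewrite !inE => /andP [hi _] ht; apply: yv_adj => //; lia.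
  - move=> i j t; rewrite !inE => /andP [hi _] /andP [hj _] nij ht; exact: yv_cross. }
have c2 : #|N :\: RB| <= q.+1 * k' + #|W|.
{ apply: leq_trans (leq_add S1 (leqnn #|W|)).
  apply: leq_trans (leq_card_setU _ _).
  apply: subset_leq_card; apply/subsetP => x; rewrite !inE => /andP [hr hx].
  rewrite hx /=; case: (Gc v (yv e q a x 1)); rewrite ?orbT //=.
  by rewrite yvr hr. }
have c3 := cardsID RB N.
set I2 := [set x in W | x != a'].
have c4 : #|W| <= #|I2| + 1.
{ apply: leq_trans (_ : #|a' |: I2| <= _).
    apply: subset_leq_card; apply/subsetP => x; rewrite !inE => hx.
    by case: eqP => //= _; rewrite hx.
  by rewrite cardsU1 addnC leq_add2l leq_b1. }
pose z x t := if t == 0 then v' else yv e q a x t.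
have S2 : #|[set i in I2 | ~~ wb Gc q.+2 v' (z i q.+2)]| <= q.+1 * k'.
{ apply: S_lemma.
  - exact: G_irr.
  - by [].
  - move=> x; rewrite !inE => /andP [/andP [hx hW] hxa].
    have hG : G v (yv e q a x 1) by apply: (@yv_adj _ _ q a x 0).
    have hne : v != yv e q a x 1 by apply: pr_ne_y1.
    have hF : F (p v) (p (yv e q a x 1)).
    { move: hW; rewrite /Gc /flip hne hG /=; by move/negPn. }
    rewrite /z /= /Gc /flip pr_ne_y1 //= -/v' -hp -/v hF.
    have hG' : ~~ G v' (yv e q a x 1) by apply: yv_F4 => //; rewrite eq_sym.
    by rewrite (negbTE hG').
  - move=> i t; rewrite !inE => /andP [/andP [hi _] _] ht; rewrite /z.
    have -> : (t == 0) = false by lia.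
    apply: yv_adj => //; lia.
  - move=> i j t; rewrite !inE => /andP [/andP [hi _] _] /andP [/andP [hj _] _] nij ht.
    rewrite /z; have -> : (t == 0) = false by lia.
    exact: yv_cross. }
set RB' := [set x | wb Gc q.+2 v' (pr e q.+1 x)].
have c5 : #|I2 :&: RB'| <= #|Rset Gc a'|.
{ apply: subset_leq_card; apply/subsetP => x; rewrite !inE => /andP [/andP [_ hx] hw].
  by rewrite hw hx. }
have c6 : #|I2 :\: RB'| <= q.+1 * k'.
{ apply: leq_trans S2; apply: subset_leq_card; apply/subsetP => x; rewrite !inE.
  by move=> /andP [hr ->]; rewrite /z /= yvr. }
have c7 := cardsID RB' I2.
have c8 := hdeg a.
have c9 : q.+1 * k' <= q.+1 * k by apply: leq_mul.
have c10 : 2 * q.+2 * k = 2 * (q.+1 * k) + 2 * k by nia.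
change (is_true (#|Rset Gc a| < k)) in hbad.
rewrite -/N in c8.
lia.
Qed.

Lemma bad_bound (V : finType) (e : rel V) (q k k' : nat)
  (p : subdiv_vert e q.+1 -> 'I_k') (F : rel 'I_k')
  (se : symmetric e) (ie : irreflexive e)
  (hdeg : forall v, 2 * q.+2 * k <= #|[set w | e v w]|) (kk : k' <= k) :
  #|[set a | ~~ good k (flip (subdiv e q.+1) p F) a]| <= k'.
Proof.
set B := [set a | _].
have inj : {in B &, injective (fun a => p (pr e q.+1 a))}.
{ move=> a a'; rewrite !inE => ha ha' hp.
  apply/eqP/negPn/negP => naa'.
  by move: ha'; rewrite (@bad_bad _ _ q k k' p F se ie hdeg kk a a' naa' hp ha). }
rewrite -(card_in_imset inj); apply: leq_trans (max_card _) _.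
by rewrite card_ord.
Qed.

Lemma step (V : finType) (e : rel V) (q k k' : nat)
  (se : symmetric e) (ie : irreflexive e)
  (hdeg : forall v, 2 * q.+2 * k <= #|[set w | e v w]|) (kk : k' <= k)
  (Gc : rel (subdiv_vert e q.+1)) (a : V) (p : subdiv_vert e q.+1 -> 'I_k') (F : rel 'I_k') :
  good k Gc a -> exists b, within Gc q.+2 (pr e q.+1 a) (pr e q.+1 b) /\
     good k (flip (subdiv e q.+1) p F) b.
Proof.
move=> ga.
set C := a |: Rset Gc a.
have hC : k < #|C|.
{ rewrite cardsU1. have -> : a \notin Rset Gc a by rewrite inE eqxx.
  by rewrite add1n ltnS. }
have hB := @bad_bound _ _ q k k' p F se ie hdeg kk.
have : ~~ (C \subset [set a | ~~ good k (flip (subdiv e q.+1) p F) a]).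
{ apply/negP => /subset_leq_card; lia. }
case/subsetPn => b bC; rewrite inE negbK => gb.
exists b; split => //.
move: bC; rewrite !inE => /orP [/eqP ->|/andP [_ /wbP //]].
exact: within_refl.
Qed.

Lemma good_noniso (V : finType) (e : rel V) (q k : nat) (hk : 1 <= k)
  (Gc : rel (subdiv_vert e q.+1)) (b : V) :
  good k Gc b -> ~ isolated Gc (pr e q.+1 b).
Proof.
rewrite /good => hg hiso.
have : 0 < #|Rset Gc b| by lia.
case/card_gt0P => c; rewrite inE => /andP [ncb /wbP [s [_ hp hl]]].
case: s hp hl => [|s0 s] /=.
  by move=> _ /pr_inj ecb; move: ncb; rewrite ecb eqxx.
by case/andP => h _ _; move: (hiso s0); rewrite h.
Qed.

Lemma game (V : finType) (e : rel V) (q k k' : nat) (hk : 1 <= k)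
  (se : symmetric e) (ie : irreflexive e)
  (hdeg : forall v, 2 * q.+2 * k <= #|[set w | e v w]|) (kk : k' <= k) n :
  forall (Gc : rel (subdiv_vert e q.+1)) (a : V), good k Gc a ->
  ~ flipper_wins_in (subdiv e q.+1) q.+2 k' n Gc (pr e q.+1 a).
Proof.
elim: n => [|n IH] Gc a ga //=.
case=> p [F [_ H]].
have [b [wb' gb]] := @step _ _ q k k' se ie hdeg kk Gc a p F ga.
case: (H _ wb') => [iso|win].
  exact: (good_noniso hk gb iso).
exact: (IH _ _ gb win).
Qed.

Lemma path_yv (V : finType) (e : rel V) (q : nat) (a x : V)
  (se : symmetric e) (ie : irreflexive e) (hax : e a x) :
  forall n m, m + n <= q.+2 ->
  path (subdiv e q.+1) (yv e q a x m) [seq yv e q a x t | t <- iota m.+1 n].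
Proof.
elim=> [|n IH] m hmn //=.
rewrite yv_adj //; last lia.
apply: IH; lia.
Qed.

Theorem mainTheorem10 (r k : nat) (V : finType) (e : rel V)
  (hr : 2 <= r) (hk : 1 <= k) (hH : simple_graph e) (hne : 0 < #|V|)
  (hdeg : min_degree_ge e (2 * r * k)) :
  fw_gt (subdiv e r.-1) r k.
Proof.
case: r hr hdeg => [|[|q]] // _ hdeg.
case: hH => se ie.
move=> k' Hw; rewrite ltnNge; apply/negP => kk.
case/card_gt0P: hne => a0 _.
have [n Hn] := Hw (pr e q.+1 a0).
apply: (@game _ _ q k k' hk se ie hdeg kk n _ a0 _ Hn).
rewrite /good.
apply: leq_trans (_ : #|[set w | e a0 w]| <= _).
  apply: leq_trans (hdeg a0); nia.
apply: subset_leq_card; apply/subsetP => x; rewrite !inE => hx.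
apply/andP; split.
  by apply: contraTneq hx => ->; rewrite ie.
apply/wbP; exists [seq yv e q a0 x t | t <- iota 1 q.+2]; split.
- by rewrite size_map size_iota.
- by rewrite -(yv0 e q a0 x); apply: path_yv.
- rewrite -(yv0 e q a0 x) last_map (_ : iota 1 q.+2 = iota 1 q.+1 ++ [:: q.+2]).
    by rewrite last_cat /= yvr.
  by rewrite -(addn1 q.+1) iotaD /= add1n addn1.
Qed.
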